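(* Let $K$ be a field, $S=K[x_1,\ldots,x_n]$, $I\subset S$ a monomial ideal with $I\ne S$ and $G(I)=\{x^{a_1},\ldots,x^{a_m}\}$. Let $T$ be the polynomial ring over $K$ in variables $x_{l1},\ldots,x_{lm_l}$, $l=1,\ldots,n$. For $l=1,\ldots,n$ and $j=1,\ldots,m$ let $L_{l,a_j(l)}$ be a monomial ideal in $x_{l1},\ldots,x_{lm_l}$ with $L_{l,a_j(l)}\subset L_{l,a_k(l)}$ whenever $a_j(l)\ge a_k(l)$, and let $L_j=\prod_{l=1}^nL_{l,a_j(l)}\subset T$. Then the ideals $L_{ij}$ of the complex $\mathbb{F}^*$ of $L_1,\ldots,L_m$ induced by $I$ satisfy \[ L_{ij}=\prod_{l=1}^nL_{l,a_{ij}(l)}\quad\text{for all }1\le i\le p,\ 1\le j\le\beta_i, \] where $L_{l,a_{ij}(l)}$ denotes $L_{l,a_k(l)}$ for any $k$ with $a_k(l)=a_{ij}(l)$ (such $k$ always exists).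
   Context: For $a\in\mathbb{N}^n$, $x^a=x_1^{a(1)}\cdots x_n^{a(n)}$; $G(I)$ is the minimal monomial generating set. Let $0\to F_p\to\cdots\to F_1\to F_0\to S/I\to 0$ be the $\mathbb{Z}^n$-graded minimal free resolution of $S/I$ with differential $\partial$, where $F_0=S$ with basis $f_{01}$ of degree $0$, and $F_i=\bigoplus_{j=1}^{\beta_i}Sf_{ij}$ with $f_{ij}$ homogeneous of multidegree $a_{ij}\in\mathbb{N}^n$; here $\beta_1=m$, $a_{1j}=a_j$, $\partial(f_{1j})=x^{a_j}f_{01}$. Write $\partial(f_{ij})=\sum_k\lambda^{(i)}_{kj}x^{a_{ij}-a_{i-1,k}}f_{i-1,k}$ with $\lambda^{(i)}_{kj}\in K$, where $\lambda^{(i)}_{kj}=0$ whenever $a_{ij}-a_{i-1,k}\notin\mathbb{N}^n$. The ideals of $\mathbb{F}^*$ are defined by $L_{1j}=L_j$ and, for $i\ge2$, $L_{ij}=\bigcap_{k:\lambda^{(i)}_{kj}\ne0}L_{i-1,k}$. *)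

(* Defs.v *)
From HB Require Import structures.
From mathcomp Require Import all_boot all_order all_algebra.
From mathcomp Require Import mpoly.
Set Implicit Arguments. Unset Strict Implicit. Unset Printing Implicit Defensive.
Import Order.TTheory GRing.Theory.
Local Open Scope ring_scope.

Definition subsetR (R : Type) := R -> Prop.

Definition gen_ideal (R : comPzRingType) (G : subsetR R) : subsetR R :=
  fun f => exists s : seq (R * R),
      (forall x, x \in s -> G x.2) /\ f = \sum_(x <- s) (x.1 * x.2).

Definition unit_ideal (R : Type) : subsetR R := fun _ => True.

Definition prod_ideal (R : comPzRingType) (L M : subsetR R) : subsetR R :=
  gen_ideal (fun f => exists g h, L g /\ M h /\ f = g * h).

Definition big_prod_ideal (R : comPzRingType) (n : nat) (L : 'I_n -> subsetR R)
  : subsetR R :=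
  foldr (fun l acc => prod_ideal (L l) acc) (@unit_ideal R) (enum 'I_n).

Definition ideal_eq (R : Type) (L M : subsetR R) := forall f, L f <-> M f.

Definition monomial_ideal_of (K : fieldType) (n m : nat) (a : 'I_m -> 'X_{1..n})
  : subsetR {mpoly K[n]} :=
  gen_ideal (fun f => exists j : 'I_m, f = 'X_[a j]).

(* T = K[x_v : v < N]; each variable v belongs to the block blk v = l, i.e.
   the variables x_{l1},...,x_{l m_l} are the v with blk v = l. *)
Definition monomial_ideal_in_block (K : fieldType) (N n : nat)
    (blk : 'I_N -> 'I_n) (l : 'I_n) (L : subsetR {mpoly K[N]}) : Prop :=
  exists G : 'X_{1..N} -> Prop,
    (forall mo, G mo -> forall v : 'I_N, blk v != l -> mo v = 0%N) /\
    ideal_eq L (gen_ideal (fun f => exists mo, G mo /\ f = 'X_[mo])).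

(* The i-th differential of the Z^n-graded complex as a matrix
   F_i = S^(beta i) -> F_(i-1) = S^(beta (i-1)) (acting on column vectors):
   d(f_ij) = sum_k lam i k j * x^(ad i j - ad (i-1) k) f_(i-1,k). *)
Definition diff_mx (K : fieldType) (n : nat) (beta : nat -> nat)
    (ad : nat -> nat -> 'X_{1..n}) (lam : nat -> nat -> nat -> K) (i : nat)
  : 'M[{mpoly K[n]}]_(beta i.-1, beta i) :=
  \matrix_(k < beta i.-1, j < beta i)
     (lam i k j *: 'X_[(ad i j - ad i.-1 k)%MM]).

(* (beta, ad, lam) describe a Z^n-graded minimal free resolution
   0 -> F_p -> ... -> F_1 -> F_0 -> S/I -> 0  with I generated by x^(a j). *)
Definition is_graded_min_free_res (K : fieldType) (n m : nat)
    (a : 'I_m -> 'X_{1..n}) (p : nat) (beta : nat -> nat)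
    (ad : nat -> nat -> 'X_{1..n}) (lam : nat -> nat -> nat -> K) : Prop :=
  (* F_0 = S with basis f_01 of degree 0 *)
      (beta 0 = 1%N /\ ad 0 0 = 0%MM) /\
      (* F_1 : basis f_1j of degree a_j, d(f_1j) = x^(a_j) f_01 *)
      (beta 1 = m /\ (forall j : 'I_m, ad 1 j = a j /\ lam 1 0 j = 1)) /\
      (forall i, (p < i)%N -> beta i = 0%N) /\
      (* homogeneity: lam = 0 whenever ad i j - ad (i-1) k is not in N^n *)
      (forall i k j, ~~ (ad i.-1 k <= ad i j)%MM -> lam i k j = 0) /\
      (forall i, (1 <= i)%N -> (i < p)%N ->
           diff_mx beta ad lam i *m diff_mx beta ad lam i.+1 = 0) /\
      (* exactness at F_i, 1 <= i <= p (at F_0 and S/I it is automatic) *)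
      (forall i, (1 <= i)%N -> (i <= p)%N ->
         forall v : 'cV[{mpoly K[n]}]_(beta i),
           diff_mx beta ad lam i *m v = 0 ->
           exists w : 'cV[{mpoly K[n]}]_(beta i.+1),
             diff_mx beta ad lam i.+1 *m w = v) /\
      (* minimality: d(F_i) is contained in (x_1..x_n) F_(i-1) *)
      (forall i k j, (1 <= i)%N -> (i <= p)%N -> (k < beta i.-1)%N ->
         (j < beta i)%N -> lam i k j != 0 -> ad i.-1 k != ad i j).

(* Ideals L_ij of F^* : L_1j = L_j, L_ij = cap_{k : lam i k j <> 0} L_(i-1),k.
   (Empty intersection = unit ideal; L_0j is unused.) *)
Fixpoint Lstar (R : Type) (beta : nat -> nat) (K : Type)
    (lam : nat -> nat -> nat -> K) (zero : K) (Lgen : nat -> subsetR R)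
    (i : nat) : nat -> subsetR R :=
  match i with
  | 0 => fun _ => @unit_ideal R
  | S i' =>
    match i' with
    | 0 => Lgen
    | _ => fun j f => forall k, (k < beta i')%N -> lam i k j <> zero ->
                                Lstar beta lam zero Lgen i' k f
    end
  end.

(* Main.v *)
Require Import Defs.
From HB Require Import structures.
From mathcomp Require Import all_boot all_order all_algebra.
From mathcomp Require Import mpoly zify.
Import GRing.Theory.
Local Open Scope ring_scope.
Set Implicit Arguments. Unset Strict Implicit.

Section Mono.
Variables (K : fieldType) (N : nat).
Local Notation R := {mpoly K[N]}.

Definition supp_ok (P : 'X_{1..N} -> Prop) (f : R) :=
  forall mo, mo \in msupp f -> P mo.

Lemma supp_ok_gen (P : 'X_{1..N} -> Prop)
  (Pup : forall m d, P m -> P (m + d)%MM) (G : subsetR R) :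
  (forall g, G g -> supp_ok P g) -> forall f, gen_ideal G f -> supp_ok P f.
Proof.
move=> HG f [s [Hs ->]] mo /msupp_sum_le /flattenP [t /mapP [x xs ->]].
move=> /msuppM_le /allpairsP [[m1 m2] /= [_ m2in ->]].
rewrite mem_filter /= in xs; rewrite addmC; apply: Pup; exact: (HG _ (Hs _ xs) _ m2in).
Qed.

Definition monos (G : 'X_{1..N} -> Prop) : subsetR R :=
  fun f => exists mo, G mo /\ f = 'X_[mo].

Lemma gen_mono (G : 'X_{1..N} -> Prop) f :
  gen_ideal (monos G) f ->
  supp_ok (fun mo => exists g, G g /\ (g <= mo)%MM) f.
Proof.
apply: supp_ok_gen.
  move=> m d [g [Gg le]]; exists g; split=> //.
  exact: (lepm_trans le (lem_addr m d)).
move=> g [mo [Gmo ->]] mo'; rewrite msuppX inE => /eqP ->.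
by exists mo; split=> //; apply: lepm_refl.
Qed.

Lemma mono_gen (Gs : subsetR R) f :
  (forall mo, mo \in msupp f -> Gs 'X_[mo]) -> gen_ideal Gs f.
Proof.
move=> H; exists [seq ((f@_m)%:MP, 'X_[m]) | m <- msupp f]; split.
  by move=> x /mapP [m mi ->] /=; apply: H.
rewrite big_map {1}(mpolyE f); apply: eq_bigr => m _ /=.
by rewrite mul_mpolyC.
Qed.

Lemma X_in_gen (Gs : subsetR R) mo : Gs 'X_[mo] -> gen_ideal Gs 'X_[mo].
Proof. by move=> H; apply: mono_gen => m; rewrite msuppX inE => /eqP ->. Qed.

End Mono.

Section Blk.
Variables (K : fieldType) (N n : nat) (blk : 'I_N -> 'I_n).
Local Notation R := {mpoly K[N]}.

Definition Cblk (A : subsetR R) (l : 'I_n) (mo : 'X_{1..N}) :=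
  exists g : 'X_{1..N}, (forall v, blk v != l -> g v = 0%N) /\ A 'X_[g] /\ (g <= mo)%MM.

Lemma Cblk_up A l m d : Cblk A l m -> Cblk A l (m + d)%MM.
Proof.
move=> [g [h1 [h2 h3]]]; exists g; split=> //; split=> //.
exact: (lepm_trans h3 (lem_addr m d)).
Qed.

Lemma Cblk_of A l : monomial_ideal_in_block blk l A ->
  forall f, A f -> supp_ok (Cblk A l) f.
Proof.
move=> [G [HGb Heq]] f /Heq /gen_mono Hf mo /Hf [g [Gg le]].
exists g; split; first exact: HGb.
split=> //; apply/Heq; apply: X_in_gen; by exists g.
Qed.

Lemma prod_char (A : 'I_n -> subsetR R)
  (HA : forall l, monomial_ideal_in_block blk l (A l)) (s : seq 'I_n) :
  uniq s -> forall f,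
  foldr (fun l acc => prod_ideal (A l) acc) (@unit_ideal R) s f <->
  supp_ok (fun mo => forall l, l \in s -> Cblk (A l) l mo) f.
Proof.
elim: s => [|l s IH] /=.
  by move=> _ f; split=> // _ mo _ l; rewrite in_nil.
move=> /andP [lns us] f; split.
  apply: supp_ok_gen.
    move=> m d H l' l's; exact: Cblk_up (H l' l's).
  move=> g [x [y [Ax [By ->]]]] mo /msuppM_le /allpairsP [[m1 m2] /= [m1in m2in ->]].
  move=> l'; rewrite inE => /orP [/eqP -> | l's].
    exact: Cblk_up (Cblk_of (HA l) Ax m1in).
  rewrite addmC; apply: Cblk_up.
  by apply: ((proj1 (IH us y)) By _ m2in).
move=> Hf; apply: mono_gen => mo /Hf Hmo.
have [g0 [b0 [A0 le0]]] := Hmo l (mem_head _ _).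
exists 'X_[g0], 'X_[mo - g0]; split=> //; split.
  apply/(proj2 (IH us _)) => mo'; rewrite msuppX inE => /eqP -> l' l's.
  have [g' [b' [A' le']]] := Hmo l' (ltac:(by rewrite inE l's orbT)).
  exists g'; split=> //; split=> //.
  apply/mnm_lepP => v; rewrite mnmBE.
  have l'l : l' != l by apply: contraNneq lns => <-.
  case: (eqVneq (blk v) l) => bv.
    by rewrite b' ?leq0n // bv eq_sym.
  rewrite b0 // subn0; exact: (mnm_lepP le').
by rewrite -mpolyXD addmC submK.
Qed.

Lemma big_prod_char (A : 'I_n -> subsetR R)
  (HA : forall l, monomial_ideal_in_block blk l (A l)) f :
  big_prod_ideal A f <-> supp_ok (fun mo => forall l, Cblk (A l) l mo) f.
Proof.
rewrite /big_prod_ideal (prod_char HA (enum_uniq _)).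
split=> H mo /H H' l; first by apply: H'; rewrite mem_enum.
by move=> _; apply: H'.
Qed.

End Blk.

Lemma meval0X (K : fieldType) n (d : 'X_{1..n}) : d != 0%MM ->
  meval (fun _ => 0 : K) 'X_[d] = 0.
Proof.
move=> d0; rewrite mevalX.
have [l dl] : exists l, d l != 0%N.
  apply/existsP; apply: contraR d0 => /existsPn H; apply/eqP/mnmP => l.
  by rewrite mnm0E; apply/eqP; have := H l; rewrite negbK.
by rewrite (bigD1 l) //= expr0n (negbTE dl) mul0r.
Qed.

Section Res.
Variables (K : fieldType) (n m : nat) (a : 'I_m -> 'X_{1..n}) (p : nat)
  (beta : nat -> nat) (ad : nat -> nat -> 'X_{1..n}) (lam : nat -> nat -> nat -> K).
Hypothesis hres : is_graded_min_free_res a p beta ad lam.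
Local Notation D := (diff_mx beta ad lam).

Lemma key i' (Hp : (i'.+2 <= p)%N) (j : 'I_(beta i'.+2)) (q : {mpoly K[n]})
  (u : 'cV_(beta i'.+1)) :
  meval (fun _ => 0) q = 0 -> (forall k, D i'.+2 k j = q * u k 0) ->
  D i'.+1 *m u = 0 -> False.
Proof.
case: hres => [_ [_ [Hz [Hhom [Hcx [Hex Hmin]]]]]] Hq Hcol Hu.
have [w Hw] := Hex i'.+1 erefl (ltnW Hp) u Hu.
pose v := delta_mx j 0 - q *: w.
have Dv : D i'.+2 *m v = 0.
  rewrite mulmxBr -scalemxAr Hw -colE; apply/eqP; rewrite subr_eq0; apply/eqP.
  by apply/matrixP => k c; rewrite (ord1 c) [RHS]mxE -Hcol mxE.
have [z Hz'] := Hex i'.+2 erefl Hp v Dv.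
have := congr1 (fun M : 'cV[{mpoly K[n]}]_(beta i'.+2) => meval (fun _ => 0 : K) (M j 0)) Hz'.
rewrite /v !mxE !eqxx /= rmorphB rmorphM /= Hq mul0r rmorph1 subr0.
rewrite raddf_sum big1 => [/eqP|j' _].
  by rewrite eq_sym oner_eq0.
change (meval (fun _ => 0 : K) (D i'.+3 j j' * z j' 0) = 0).
rewrite mevalM mxE mevalZ.
case: (eqVneq (lam i'.+3 j j') 0) => hl; first by rewrite hl !mul0r.
have Hp3 : (i'.+3 <= p)%N.
  case: (leqP i'.+3 p) => // hlt; have := leq_trans (ltn_ord j') (eq_leq (Hz _ hlt)); by [].
have hne := Hmin i'.+3 j j' erefl Hp3 (ltn_ord j) (ltn_ord j') hl.
have hle : (ad i'.+2 j <= ad i'.+3 j')%MM.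
  apply: contraR hl => /(Hhom i'.+3 j j') ->; by rewrite eqxx.
rewrite meval0X ?mulr0 ?mul0r //.
apply: contra hne => /eqP d0; apply/eqP.
by rewrite -[RHS](submK hle) d0 add0m.
Qed.

Lemma core i' (Hp : (i'.+2 <= p)%N) (j : 'I_(beta i'.+2)) :
  forall l, exists k0 : 'I_(beta i'.+1), lam i'.+2 k0 j != 0 /\
    ad i'.+2 j l = ad i'.+1 k0 l.
Proof.
have Hh := hres; case: Hh => [_ [_ [Hz [Hhom [Hcx [Hex Hmin]]]]]].
pose A := [pred k : 'I_(beta i'.+1) | lam i'.+2 k j != 0].
have hom : forall k : 'I_(beta i'.+1), A k -> (ad i'.+1 k <= ad i'.+2 j)%MM.
  move=> k /=; apply: contraR => /(Hhom i'.+2 k j) ->; by rewrite eqxx.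
have Acard : (0 < #|A|)%N.
  rewrite lt0n; apply/negP => /eqP /card0_eq HA.
  apply: (@key i' Hp j 0 0); first exact: raddf0.
    move=> k; rewrite !mxE; have := HA k; rewrite !inE /= => /negbFE/eqP ->.
    by rewrite scale0r mul0r.
  exact: mulmx0.
pose b := [multinom \max_(k in A) ad i'.+1 k l | l < n].
have bE : b = ad i'.+2 j.
  have ble : (b <= ad i'.+2 j)%MM.
    apply/mnm_lepP => l; rewrite mnmE; apply/bigmax_leqP => k Ak.
    exact: (mnm_lepP (hom k Ak) l).
  case: (eqVneq b (ad i'.+2 j)) => // hne; exfalso.
  pose c := (ad i'.+2 j - b)%MM.
  have c0 : c != 0%MM.
    apply: contra hne => /eqP c0; apply/eqP.
    by rewrite -[RHS](submK ble) -/c c0 add0m.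
  pose u := \col_(k < beta i'.+1) (lam i'.+2 k j *: 'X_[(b - ad i'.+1 k)%MM]).
  have Hcol : forall k, D i'.+2 k j = 'X_[c] * u k 0.
    move=> k; rewrite !mxE.
    case: (eqVneq (lam i'.+2 k j) 0) => hl; first by rewrite hl !scale0r mulr0.
    have Ak : A k by [].
    have hkb : (ad i'.+1 k <= b)%MM.
      apply/mnm_lepP => l; rewrite mnmE; by apply: leq_bigmax_cond.
    rewrite -scalerAr -mpolyXD; congr (_ *: 'X_[_]).
    apply/mnmP => l; rewrite /c !mnmBE !mnmDE !mnmBE.
    have h1 := mnm_lepP ble l; have h2 := mnm_lepP hkb l.
    change (ad i'.+2.-1 k l) with (ad i'.+1 k l).
    move: (ad i'.+2 j l) (b l) (ad i'.+1 k l) h1 h2 => x y z h1 h2; lia.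
  apply: (@key i' Hp j 'X_[c] u); [exact: meval0X | exact: Hcol |].
  have Hc := Hcx i'.+1 erefl Hp.
  have : D i'.+1 *m col j (D i'.+2) = 0 by rewrite colE mulmxA Hc mul0mx.
  have -> : col j (D i'.+2) = 'X_[c] *: u.
    by apply/matrixP => k cc; rewrite (ord1 cc) [RHS]mxE -Hcol mxE.
  rewrite -scalemxAr => /eqP; rewrite scalemx_eq0 => /orP [|/eqP //].
  move=> /eqP hX; have := @mcoeffX n K c c; rewrite hX mcoeff0 eqxx => /eqP.
  by rewrite eq_sym oner_eq0.
move=> l; have [k0 Ak0 Hk0] := @eq_bigmax_cond _ A (fun k : 'I_(beta i'.+1) => ad i'.+1 k l) Acard.
exists k0; split; first exact: Ak0.
by rewrite -bE mnmE Hk0.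
Qed.

End Res.

Theorem corollary1p7 (K : fieldType) (n m : nat) (a : 'I_m -> 'X_{1..n})
    (p : nat) (beta : nat -> nat) (ad : nat -> nat -> 'X_{1..n})
    (lam : nat -> nat -> nat -> K)
    (N : nat) (blk : 'I_N -> 'I_n) (Lfam : 'I_n -> nat -> subsetR {mpoly K[N]}) :
  (* G(I) = {x^a_1,...,x^a_m}: minimal monomial generators *)
  (forall j k : 'I_m, j != k -> ~~ (a j <= a k)%MM) ->
  (* I <> S *)
  ~ @monomial_ideal_of K n m a 1 ->
  is_graded_min_free_res a p beta ad lam ->
  (* each L_{l,a_j(l)} is a monomial ideal in x_{l1},...,x_{l m_l} *)
  (forall (l : 'I_n) (j : 'I_m), monomial_ideal_in_block blk l (Lfam l (a j l))) ->
  (* L_{l,a_j(l)} ⊆ L_{l,a_k(l)} whenever a_j(l) >= a_k(l) *)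
  (forall (l : 'I_n) (j k : 'I_m), (a k l <= a j l)%N ->
       forall f, Lfam l (a j l) f -> Lfam l (a k l) f) ->
  let Lj := fun j : nat => big_prod_ideal (fun l => Lfam l (ad 1%N j l)) in
  forall i j, (1 <= i <= p)%N -> (j < beta i)%N ->
    (forall l : 'I_n, exists k : 'I_m, a k l = ad i j l) /\
    ideal_eq (Lstar beta lam 0 Lj i j)
             (big_prod_ideal (fun l => Lfam l (ad i j l))).
Proof.
move=> _ _ hres Hmono Hchain Lj.
have Hh := hres; case: Hh => [_ [[Hb1 Had1] [Hz [Hhom _]]]].
have main : forall i, (1 <= i <= p)%N -> forall j, (j < beta i)%N ->
    (forall l : 'I_n, exists k : 'I_m, a k l = ad i j l) /\
    ideal_eq (Lstar beta lam 0 Lj i j)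
             (big_prod_ideal (fun l => Lfam l (ad i j l))).
  elim=> [//|i IH]; case: i IH => [|i'] IH Hi j Hj.
    have Hj' : (j < m)%N by rewrite -Hb1.
    split; last by [].
    move=> l; exists (Ordinal Hj'); by rewrite (proj1 (Had1 (Ordinal Hj'))).
  have Hp : (i'.+2 <= p)%N by case/andP: Hi.
  have IH' := IH (ltac:(by rewrite /= ltnW)).
  have Hcore := core hres Hp (Ordinal Hj).
  have P1 : forall l : 'I_n, exists k : 'I_m, a k l = ad i'.+2 j l.
    move=> l; have [k0 [_ E]] := Hcore l.
    have [Hk _] := IH' k0 (ltn_ord k0); have [k Hk'] := Hk l.
    by exists k; rewrite Hk' /= E.
  split=> //.
  have HA : forall l, monomial_ideal_in_block blk l (Lfam l (ad i'.+2 j l)).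
    by move=> l; have [k <-] := P1 l; apply: Hmono.
  have HAk : forall k, (k < beta i'.+1)%N ->
      forall l, monomial_ideal_in_block blk l (Lfam l (ad i'.+1 k l)).
    move=> k Hk l; have [k1 <-] := (IH' k Hk).1 l; apply: Hmono.
  move=> f; rewrite (big_prod_char HA) /=; split.
    move=> H mo mof l; have [k0 [nz E]] := Hcore l.
    have := H k0 (ltn_ord k0) (elimN eqP nz).
    move/(IH' k0 (ltn_ord k0)).2/(big_prod_char (HAk k0 (ltn_ord k0))).
    by move=> /(_ mo mof l); rewrite /= -E.
  move=> H k Hk nz; apply/(IH' k Hk).2/(big_prod_char (HAk k Hk)) => mo mof l.
  have [g [bg [Ag leg]]] := H mo mof l.
  exists g; split=> //; split=> //.
  have [k2 E2] := P1 l; have [k1 E1] := (IH' k Hk).1 l.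
  have hom : (ad i'.+1 k <= ad i'.+2 j)%MM.
    apply: contraR (introN eqP nz) => /(Hhom i'.+2 k j) ->; by rewrite eqxx.
  rewrite -E1; apply: (Hchain l k2 k1); first by rewrite E1 E2; exact: (mnm_lepP hom l).
  by rewrite E2.
by move=> i j Hi Hj; exact: main.
Qed.
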